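(* Let $P$ be a defining matrix as in the context. Then $\gcd(M(P))=\gcd(M'(P))$.
   Context: Fix integers $r\ge1$, $n_0,\dots,n_r\ge1$, vectors $l_i=(l_{i1},\dots,l_{in_i})\in\mathbb{Z}_{\ge1}^{n_i}$, $d_i\in\mathbb{Z}^{n_i}$ with $\gcd(l_{ij},d_{ij})=1$ and $d_{i1}/l_{i1}>\dots>d_{in_i}/l_{in_i}$. With $e_1,\dots,e_{r+1}$ the standard basis of $\mathbb{Z}^{r+1}$, $u=e_{r+1}$, $e_0=-(e_1+\dots+e_r)$, let $v_{ij}=l_{ij}e_i+d_{ij}u$. $P$ is the integral matrix with columns $v_{ij}$ ($0\le i\le r$, $1\le j\le n_i$) in type (ee), these together with $u$ in type (pe), with $-u$ in type (ep), with $u$ and $-u$ in type (pp); $P$ is a defining matrix if its columns generate $\mathbb{Q}^{r+1}$ as a convex cone. $M(P)$ is the set of absolute values of all $(r+1)\times(r+1)$ minors of $P$ (formed from sets of $r+1$ distinct columns). Set $\mu(j_0,\dots,j_r)=\sum_{i_0=0}^rd_{i_0j_{i_0}}\prod_{i\ne i_0}l_{ij_i}$, $\hat\mu=\mu(n_0,\dots,n_r)$, $\hat\nu(i,j)=l_{ij}d_{in_i}-l_{in_i}d_{ij}$. In type (ee), $M'(P)=\{|\hat\mu|\}\cup\{|\hat\nu(i_0,j_{i_0})|\prod_{i\ne i_0,i_1}l_{ij_i}\ ;\ 0\le i_0,i_1\le r,\ i_0\ne i_1,\ 1\le j_i\le n_i\text{ for all }i\ne i_1\}$; in types (pe),(ep),(pp),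 $M'(P)=\{\prod_{i\ne i_1}l_{ij_i}\ ;\ 0\le i_1\le r,\ 1\le j_i\le n_i\text{ for all }i\ne i_1\}$. *)

(* Defs.v *)
From mathcomp Require Import all_boot all_order all_algebra.
Unset Printing Implicit Defensive.
Import Order.TTheory GRing.Theory Num.Theory.
Local Open Scope ring_scope.

Inductive ptype := EE | PE | EP | PP.

(* Coordinates in Z^{r+1}: coordinate k (0 <= k <= r) is the coefficient of
   e_{k+1}; so u = e_{r+1} is coordinate r, e_i (1 <= i <= r) is coordinate
   i-1, and e_0 = -(e_1 + ... + e_r). Indices j are 1-based, as in the paper:
   l i j, d i j for 0 <= i <= r, 1 <= j <= n i. *)
Definition ecoord (r i k : nat) : int :=
  if i == 0%N then (if (k < r)%N then -1 else 0)
  else (if k == i.-1 then 1 else 0).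

Definition ucol (r : nat) : 'I_r.+1 -> int :=
  fun k => if (k : nat) == r then 1 else 0.

Definition vcol (r : nat) (l d : nat -> nat -> int) (i j : nat) : 'I_r.+1 -> int :=
  fun k => l i j * ecoord r i k + ucol r k * d i j.

Definition cols (r : nat) (n : nat -> nat) (l d : nat -> nat -> int) (t : ptype)
  : seq ('I_r.+1 -> int) :=
  [seq vcol r l d i j | i <- iota 0 r.+1, j <- iota 1 (n i)] ++
  match t with
  | EE => [::]
  | PE => [:: ucol r]
  | EP => [:: fun k => - ucol r k]
  | PP => [:: ucol r; fun k => - ucol r k]
  end.

Definition ncols r n l d t := size (cols r n l d t).

Definition Pmat r n l d t : 'M[int]_(r.+1, ncols r n l d t) :=
  \matrix_(k, c) nth (fun _ => 0) (cols r n l d t) c k.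

Definition is_defining r n l d t : Prop :=
  forall x : 'I_r.+1 -> rat, exists a : 'I_(ncols r n l d t) -> rat,
    (forall c, 0 <= a c) /\
    forall k, x k = \sum_c a c * ((Pmat r n l d t) k c)%:~R.

Definition gcdl (s : seq nat) : nat := foldr gcdn 0%N s.

Definition Mset r n l d t : seq nat :=
  [seq absz (\det (colsub (fun i => f i) (Pmat r n l d t)))
    | f : {ffun 'I_r.+1 -> 'I_(ncols r n l d t)} <- enum {ffun 'I_r.+1 -> 'I_(ncols r n l d t)} & injectiveb (fun i => f i)].

Definition mu_hat r (n : nat -> nat) (l d : nat -> nat -> int) : int :=
  \sum_(i0 < r.+1) d i0 (n i0) * \prod_(i < r.+1 | i != i0) l i (n i).

Definition nu_hat (n : nat -> nat) (l d : nat -> nat -> int) (i j : nat) : int :=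
  l i j * d i (n i) - l i (n i) * d i j.

(* choices (j_i) with 1 <= j_i <= n_i for all i != i1 (j_{i1} is unused and
   fixed arbitrarily to 0, so each admissible family is listed exactly once). *)
Definition nmax r (n : nat -> nat) : nat := \max_(i < r.+1) n i.
Definition Jset r (n : nat -> nat) (i1 : 'I_r.+1)
  : seq {ffun 'I_r.+1 -> 'I_(nmax r n).+1} :=
  [seq J : {ffun 'I_r.+1 -> 'I_(nmax r n).+1} <- enum {ffun 'I_r.+1 -> 'I_(nmax r n).+1}
     | [forall i, if i == i1 then (J i == 0 :> nat)
                  else (1 <= J i <= n i)%N]].

Definition Mprime r n l d t : seq nat :=
  match t with
  | EE =>
    absz (mu_hat r n l d) ::
    flatten [seq [seq absz (nu_hat n l d p.1 (J p.1)
                        * \prod_(i < r.+1 | (i != p.1) && (i != p.2)) l i (J i))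
                 | J : {ffun 'I_r.+1 -> 'I_(nmax r n).+1} <- Jset r n p.2]
            | p : 'I_r.+1 * 'I_r.+1 <- [seq (i0, i1) | i0 <- enum 'I_r.+1, i1 <- enum 'I_r.+1]
              & p.1 != p.2]
  | _ =>
    flatten [seq [seq absz (\prod_(i < r.+1 | i != i1) l i (J i)) | J : {ffun 'I_r.+1 -> 'I_(nmax r n).+1} <- Jset r n i1]
            | i1 <- enum 'I_r.+1]
  end.

(* Main.v *)
Require Import Defs.
From mathcomp Require Import all_boot all_order all_algebra.
From mathcomp Require Import ring.
From mathcomp Require Import fingroup perm.
Import Order.TTheory GRing.Theory Num.Theory.
Local Open Scope ring_scope.
Set Warnings "-notation-overridden,-ambiguous-paths".

Definition GM r (a : 'I_r.+1 -> 'I_r.+1) (lam del : 'I_r.+1 -> int) : 'M[int]_r.+1 :=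
  \matrix_(k, c) (lam c * ecoord r (a c) k + ucol r k * del c).
Definition Ebar r (a : 'I_r.+1 -> 'I_r.+1) (p : 'I_r.+1) : 'M[int]_r :=
  \matrix_(k, c) ecoord r (a (lift p c)) (lift ord_max k).
Definition Sc r (a : 'I_r.+1 -> 'I_r.+1) (p : 'I_r.+1) : int := (-1) ^+ (r + p) * \det (Ebar r a p).
Definition Fexpr r a (lam del : 'I_r.+1 -> int) : int :=
  \sum_(p < r.+1) del p * (\prod_(c < r.+1 | c != p) lam c) * Sc r a p.

Lemma prod_lift r (p : 'I_r.+1) (F : 'I_r.+1 -> int) :
  \prod_(c < r.+1 | c != p) F c = \prod_(c < r) F (lift p c).
Proof.
rewrite big_mkcond (bigD1_ord p) //= eqxx mul1r.
by apply: eq_bigr => c _; rewrite eq_sym neq_lift.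
Qed.

Lemma ecoord_last r (i : 'I_r.+1) : ecoord r i r = 0.
Proof.
rewrite /ecoord; case: i => [[|m] h] /=.
  by have -> : (r < r)%N = false by rewrite ltnn.
by have -> : (r == m) = false by apply/negbTE; rewrite neq_ltn; apply/orP; right.
Qed.

Lemma det_GM r a lam del : \det (GM r a lam del) = Fexpr r a lam del.
Proof.
rewrite (expand_det_row _ ord_max); apply: eq_bigr => p _.
rewrite mxE ecoord_last /ucol eqxx mulr0 add0r mul1r /cofactor.
have -> : row' ord_max (col' p (GM r a lam del)) =
   Ebar r a p *m diag_mx (\row_c lam (lift p c)).
  apply/matrixP => k c; rewrite mul_mx_diag !mxE /ucol.
  have -> : ((lift ord_max k : nat) == r) = false.
    by rewrite /= /bump leqNgt ltn_ord /= add0n; apply/negbTE; rewrite neq_ltn ltn_ord.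
  by rewrite mul0r addr0 mulrC.
rewrite det_mulmx det_diag prod_lift /Sc.
under eq_bigr do rewrite mxE.
rewrite [nat_of_ord ord_max]/=. ring.
Qed.

Lemma GM_eqcol r a lam del (c1 c2 : 'I_r.+1) : c1 != c2 -> a c1 = a c2 ->
  lam c1 = lam c2 -> del c1 = del c2 -> \det (GM r a lam del) = 0.
Proof.
move=> ne ea el ed; rewrite -det_tr; apply: (determinant_alternate ne) => k.
by rewrite !mxE ea el ed.
Qed.

Lemma Sc_nz_inj r a (p : 'I_r.+1) : Sc r a p != 0 ->
  forall c1 c2, c1 != p -> c2 != p -> a c1 = a c2 -> c1 = c2.
Proof.
move=> nz c1 c2 h1 h2 e; apply/eqP; apply: contraNT nz => ne.
rewrite /Sc; apply/eqP.
rewrite eq_sym in h1; rewrite eq_sym in h2.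
have [c1' D1 _] := unlift_some h1.
have [c2' D2 _] := unlift_some h2.
have ne' : c1' != c2' by apply: contraNneq ne => E; rewrite D1 D2 E.
rewrite -det_tr (determinant_alternate ne') ?mulr0 // => k.
by rewrite !mxE -D1 -D2 e.
Qed.

Lemma Sc_ext r a a' (p : 'I_r.+1) : (forall c, c != p -> a c = a' c) ->
  Sc r a p = Sc r a' p.
Proof.
move=> h; rewrite /Sc /Ebar; congr (_ * \det _); apply/matrixP => k c.
by rewrite !mxE h // eq_sym neq_lift.
Qed.

Lemma sum_delta r (p : 'I_r.+1) (F : 'I_r.+1 -> int) :
  \sum_(c < r.+1) (c == p)%:R * F c = F p.
Proof.
rewrite (bigD1 p) //= eqxx mul1r big1 ?addr0 // => c /negbTE ->; by rewrite mul0r.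
Qed.

Lemma sum_ind m (k : nat) :
  \sum_(i < m) (if k == i then 1 else 0 : int) = if (k < m)%N then 1 else 0.
Proof.
elim: m => [|m IH]; first by rewrite big_ord0.
rewrite big_ord_recr /= IH.
case: (ltngtP k m) => h.
- by rewrite ltnS (ltnW h) addr0.
- by rewrite ltnNge h addr0.
- by rewrite h ltnSn add0r.
Qed.

Lemma sum_ecoord r (k : 'I_r.+1) : \sum_(i < r.+1) ecoord r i k = 0.
Proof.
rewrite big_ord_recl.
have -> : \sum_(i < r) ecoord r (lift ord0 i) k = \sum_(i < r) (if (k : nat) == i then 1 else 0).
  by apply: eq_bigr => i _; rewrite /ecoord lift0.
by rewrite sum_ind /ecoord /=; case: (_ < _)%N; rewrite ?addNr ?addr0.
Qed.

Lemma Sc_perm r a (p p' : 'I_r.+1) : injective a -> Sc r a p = Sc r a p'.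
Proof.
move=> inja; apply/eqP; rewrite -subr_eq0; apply/eqP.
pose del c : int := (c == p)%:R - (c == p')%:R.
have E : \det (GM r a (fun _ => 1) del) = Sc r a p - Sc r a p'.
  rewrite det_GM /Fexpr.
  under eq_bigr do rewrite big1 // mulr1 mulrBl.
  by rewrite sumrB !sum_delta.
rewrite -E -det_tr; apply/eqP/det0P; exists (const_mx 1).
  by apply/eqP => /matrixP/(_ 0 0); rewrite !mxE.
apply/matrixP => i k; rewrite !mxE.
under eq_bigr do rewrite !mxE mul1r mul1r.
rewrite big_split /= -big_distrr /=.
have -> : \sum_(c < r.+1) del c = 0.
  rewrite sumrB.
  under eq_bigr do rewrite -[(_ == p)%:R]mulr1.
  under [X in _ - X]eq_bigr do rewrite -[(_ == p')%:R]mulr1.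
  by rewrite !sum_delta subrr.
rewrite mulr0 addr0; transitivity (\sum_(i0 < r.+1) ecoord r i0 k); last exact: sum_ecoord.
by rewrite [RHS](reindex_inj inja).
Qed.

Lemma Sc_id0 r : Sc r (fun c => c) ord0 = (-1) ^+ r.
Proof.
rewrite /Sc addn0.
have -> : Ebar r (fun c => c) ord0 = 1%:M.
  apply/matrixP => k c; rewrite !mxE /ecoord lift0 /= /bump leqNgt ltn_ord add0n -val_eqE /=.
  by case: eqP.

by rewrite (det1 int r) mulr1.
Qed.

Lemma abs_Sc_id r p : `|Sc r (fun c => c) p|%N = 1%N.
Proof.
by rewrite (@Sc_perm r _ p ord0) // Sc_id0 abszX /= exp1n.
Qed.

Lemma In_nth_ex (T : Type) (x0 x : T) (s : seq T) :
  List.In x s -> exists c, (c < size s)%N /\ nth x0 s c = x.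
Proof.
elim: s => [|y s IH] //= [->|/IH [c [h1 h2]]]; first by exists 0%N.
by exists c.+1.
Qed.

Lemma nth_In (T : Type) (x0 : T) (s : seq T) c :
  (c < size s)%N -> List.In (nth x0 s c) s.
Proof.
elim: s c => [|y s IH] [|c] //= h; first by left.
by right; apply: IH.
Qed.

Lemma In_cat (T : Type) (x : T) s1 s2 :
  List.In x (s1 ++ s2) <-> List.In x s1 \/ List.In x s2.
Proof.
elim: s1 => [|y s IH] /=; first by split; [right|case].
rewrite IH; tauto.
Qed.

Lemma In_map (T U : Type) (f : T -> U) x s :
  List.In x (map f s) <-> exists y, List.In y s /\ x = f y.
Proof.
elim: s => [|y s IH] /=; first by split=> // [[y []]].
rewrite IH; split.
- by case=> [<-|[z [h ->]]]; [exists y; split; [left|] | exists z; split; [right|]].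
- by case=> z [[<-|h] ->]; [left | right; exists z].
Qed.

Lemma In_flatten (T : Type) (x : T) ss :
  List.In x (flatten ss) <-> exists s, List.In s ss /\ List.In x s.
Proof.
elim: ss => [|s ss IH] /=; first by split=> // [[s []]].
rewrite In_cat IH; split.
- by case=> [h|[s' [h1 h2]]]; [exists s; split; [left|] | exists s'; split; [right|]].
- by case=> s' [[<-|h1] h2]; [left | right; exists s'].
Qed.

Lemma In_mem (T : eqType) (x : T) s : List.In x s <-> x \in s.
Proof.
elim: s => [|y s IH] //=; rewrite inE IH; split.
- by case=> [->|->]; rewrite ?eqxx ?orbT.
- by case/orP => [/eqP->|]; [left|right].
Qed.

Lemma In_iota m k i : List.In i (iota m k) <-> (m <= i < m + k)%N.
Proof. by rewrite In_mem mem_iota. Qed.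

Definition vpart r n (l d : nat -> nat -> int) :=
  [seq vcol r l d i j | i <- iota 0 r.+1, j <- iota 1 (n i)].

Lemma In_vpart r n l d x : List.In x (vpart r n l d) <->
  exists i j, (i <= r)%N /\ (1 <= j <= n i)%N /\ x = vcol r l d i j.
Proof.
rewrite /vpart In_flatten; split.
- case=> s [/In_map [i [/In_iota hi ->]] /In_map [j [/In_iota hj ->]]].
  by exists i, j; rewrite add1n ltnS in hj; split.
- case=> i [j [hi [hj ->]]]; exists [seq vcol r l d i j0 | j0 <- iota 1 (n i)].
  split; apply/In_map.
    by exists i; split => //; apply/In_iota.
  by exists j; split => //; apply/In_iota; rewrite add1n ltnS.
Qed.

Lemma cols_class r n l d t (c : 'I_(ncols r n l d t)) :
  (exists i j, (i <= r)%N /\ (1 <= j <= n i)%N /\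
     nth (fun _ => 0) (cols r n l d t) c = vcol r l d i j) \/
  (t <> EE /\ exists s : int, (s = 1 \/ s = -1) /\
     forall k, nth (fun _ => 0) (cols r n l d t) c k = ucol r k * s).
Proof.
have := @nth_In _ (fun _ => 0) (cols r n l d t) c (ltn_ord c).
move: (nth _ _ _) => x; clear c.
rewrite /cols -/(vpart r n l d) In_cat In_vpart.
case=> [h|h]; first by left.
right; move: h; case: t => /= h.
- by [].
- split=> //; exists 1; split; first by left.
  by case: h => // <- k; rewrite mulr1.
- split=> //; exists (-1); split; first by right.
  by case: h => // <- k; rewrite mulrN1.
- split=> //; case: h => [<-|[<-|[]]].
    by exists 1; split; [left| move=> k; rewrite mulr1].
  by exists (-1); split; [right| move=> k; rewrite mulrN1].
Qed.

Lemma pos_v r n l d t i j : (i <= r)%N -> (1 <= j <= n i)%N ->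
  exists c : 'I_(ncols r n l d t), nth (fun _ => 0) (cols r n l d t) c = vcol r l d i j.
Proof.
move=> hi hj.
have : List.In (vcol r l d i j) (cols r n l d t).
  rewrite /cols -/(vpart r n l d) In_cat In_vpart; left; by exists i, j.
case/(@In_nth_ex _ (fun _ => 0)) => c [hc e].
by exists (Ordinal hc).
Qed.

Lemma pos_u r n l d t : t <> EE -> exists (c : 'I_(ncols r n l d t)) (s : int),
  (s = 1 \/ s = -1) /\ forall k, nth (fun _ => 0) (cols r n l d t) c k = ucol r k * s.
Proof.
move=> ht.
have [x [hx Hx]] : exists x, List.In x (cols r n l d t) /\
   exists s : int, (s = 1 \/ s = -1) /\ forall k, x k = ucol r k * s.
  case: t ht => // _.
  - exists (ucol r); split; first by rewrite /cols In_cat; right; left.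
    by exists 1; split; [left | move=> k; rewrite mulr1].
  - exists (fun k => - ucol r k); split; first by rewrite /cols In_cat; right; left.
    by exists (-1); split; [right | move=> k; rewrite mulrN1].
  - exists (ucol r); split; first by rewrite /cols In_cat; right; left.
    by exists 1; split; [left | move=> k; rewrite mulr1].
case/(@In_nth_ex _ (fun _ => 0)): hx => c [hc e].
by exists (Ordinal hc); rewrite /= e.
Qed.

Lemma gcdl_dvd s x : x \in s -> (gcdl s %| x)%N.
Proof.
elim: s => [|y s IH] //=; rewrite inE => /orP [/eqP ->|h].
  exact: dvdn_gcdl.
exact: dvdn_trans (dvdn_gcdr _ _) (IH h).
Qed.

Lemma dvd_gcdl g s : (forall x, x \in s -> g %| x)%N -> (g %| gcdl s)%N.
Proof.
elim: s => [|y s IH] h //=; rewrite dvdn_gcd h ?inE ?eqxx //= IH // => x hx.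
by apply: h; rewrite inE hx orbT.
Qed.

Lemma colsub_GM r n l d t (f : 'I_r.+1 -> 'I_(ncols r n l d t)) (a : 'I_r.+1 -> 'I_r.+1) lam del :
  (forall c k, nth (fun _ => 0) (cols r n l d t) (f c) k =
      lam c * ecoord r (a c) k + ucol r k * del c) ->
  colsub f (Pmat r n l d t) = GM r a lam del.
Proof. by move=> h; apply/matrixP => k c; rewrite !mxE h. Qed.

Lemma Mdiv r n l d t (f : 'I_r.+1 -> 'I_(ncols r n l d t)) :
  (gcdl (Mset r n l d t) %| `|\det (colsub f (Pmat r n l d t))|)%N.
Proof.
case: (boolP (injectiveb f)) => hf.
  apply: gcdl_dvd; rewrite /Mset.
  have -> : colsub f (Pmat r n l d t) = colsub (fun i => [ffun i => f i] i) (Pmat r n l d t).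
    by apply/matrixP => i j; rewrite !mxE ffunE.
  apply: map_f; rewrite mem_filter mem_enum andbT.
  by apply/injectiveP => x y; rewrite !ffunE => /(injectiveP _ hf).
case/injectivePn: hf => x [y nxy e].
rewrite -det_tr (determinant_alternate nxy) ?dvdn0 // => k.
by rewrite !mxE e.
Qed.

Lemma GMdiv r n l d t (f : 'I_r.+1 -> 'I_(ncols r n l d t)) (a : 'I_r.+1 -> 'I_r.+1) lam del :
  (forall c k, nth (fun _ => 0) (cols r n l d t) (f c) k =
      lam c * ecoord r (a c) k + ucol r k * del c) ->
  (gcdl (Mset r n l d t) %| `|Fexpr r a lam del|)%N.
Proof. by move=> h; rewrite -det_GM -(@colsub_GM r n l d t f a lam del h); apply: Mdiv. Qed.

Lemma Fexpr_perm r a lam del : injective a ->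
  Fexpr r a lam del = Sc r a ord0 * \sum_(p < r.+1) del p * \prod_(c < r.+1 | c != p) lam c.
Proof.
move=> inja; rewrite /Fexpr big_distrr /=; apply: eq_bigr => p _.
by rewrite (Sc_perm r a p ord0 inja) mulrC.
Qed.

Lemma vcolE r l d (i j : nat) k : vcol r l d i j k = l i j * ecoord r i k + ucol r k * d i j.
Proof. by []. Qed.

Lemma fin_choice (T : finType) (U : Type) (P : T -> U -> Prop) :
  (forall x, exists u, P x u) -> exists f : T -> U, forall x, P x (f x).
Proof. by move=> h; apply: (@fin_all_exists T (fun _ => U) P). Qed.

Lemma D1_mu r n l d t : (forall i, (i <= r)%N -> (1 <= n i)%N) ->
  (gcdl (Mset r n l d t) %| `|mu_hat r n l d|)%N.
Proof.
move=> hn.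
have [f hf] : exists f : 'I_r.+1 -> 'I_(ncols r n l d t), forall c,
    nth (fun _ => 0) (cols r n l d t) (f c) = vcol r l d c (n c).
  apply: (@fin_choice 'I_r.+1 'I_(ncols r n l d t) (fun c fc => nth (fun _ => 0) (cols r n l d t) fc = vcol r l d c (n c))) => c.
  apply: pos_v; first by rewrite -ltnS.
  by rewrite leqnn hn // -ltnS.
have := @GMdiv r n l d t f (fun c => c) (fun c => l c (n c)) (fun c => d c (n c)).
rewrite Fexpr_perm // Sc_id0 abszMsign; apply => c k; by rewrite hf.
Qed.

Lemma D1_nu r n l d t : (forall i, (i <= r)%N -> (1 <= n i)%N) ->
  forall (i0 i1 : 'I_r.+1) (J : 'I_r.+1 -> nat), i0 != i1 ->
  (forall i, i != i1 -> (1 <= J i <= n i)%N) ->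
  (gcdl (Mset r n l d t) %| `|(nu_hat n l d i0 (J i0) *
       \prod_(i < r.+1 | (i != i0) && (i != i1)) l i (J i))%R|)%N.
Proof.
move=> hn i0 i1 J ne hJ.
pose a := fun c : 'I_r.+1 => if c == i1 then i0 else c.
pose jj := fun c : 'I_r.+1 => if c == i1 then n i0 else J c.
have [f hf] : exists f : 'I_r.+1 -> 'I_(ncols r n l d t), forall c,
    nth (fun _ => 0) (cols r n l d t) (f c) = vcol r l d (a c) (jj c).
  apply: (@fin_choice 'I_r.+1 'I_(ncols r n l d t) (fun c fc => nth (fun _ => 0) (cols r n l d t) fc = vcol r l d (a c) (jj c))) => c.
  apply: pos_v; first by rewrite -ltnS.
  rewrite /jj /a; case: ifP => h; last by apply: hJ; rewrite h.
  by rewrite leqnn hn // -ltnS.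
pose lam c := l (a c) (jj c).
pose del c := d (a c) (jj c).
have := @GMdiv r n l d t f a lam del.
have Ea : a i0 = i0 by rewrite /a (negbTE ne).
have Ea1 : a i1 = i0 by rewrite /a eqxx.
have Sopp : Sc r a i0 = - Sc r a i1.
  have E := @GM_eqcol r a (fun _ => 1) (fun c => (c == i0)%:R + (c == i1)%:R) i0 i1 ne
    (etrans Ea (esym Ea1)) erefl.
  rewrite eqxx (negbTE ne) eq_sym (negbTE ne) eqxx in E.
  have {E} := E erefl; rewrite det_GM /Fexpr.
  under eq_bigr do rewrite big1 // mulr1 mulrDl.
  by rewrite big_split /= !sum_delta => /eqP; rewrite addr_eq0 => /eqP.
have S1 : `|Sc r a i1|%N = 1%N.
  by rewrite (@Sc_ext r a (fun c => c)) ?abs_Sc_id // => c /negbTE hc; rewrite /a hc.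
have Pi : forall c, (c != i0) && (c != i1) -> lam c = l c (J c).
  by move=> c /andP [_ /negbTE h]; rewrite /lam /a /jj h.
have -> : Fexpr r a lam del = Sc r a i1 * (nu_hat n l d i0 (J i0) *
       \prod_(i < r.+1 | (i != i0) && (i != i1)) l i (J i)).
  rewrite /Fexpr (bigD1 i0) //= [X in _ + X](bigD1 i1) 1?eq_sym //=.
  rewrite [X in _ + (_ + X)]big1 ?addr0; last first.
    move=> p /andP [h0 h1].
    have -> : Sc r a p = 0; last by rewrite mulr0.
    apply/eqP; apply: contraNT ne => nz.
    by apply/eqP; apply: (Sc_nz_inj _ _ _ nz); rewrite 1?eq_sym ?Ea ?Ea1.
  rewrite (bigD1 i1 (P := fun c => c != i0)) 1?eq_sym //=.
  rewrite (bigD1 i0 (P := fun c => c != i1)) //=.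
  have Q : \prod_(i < r.+1 | (i != i1) && (i != i0)) lam i =
      \prod_(i < r.+1 | (i != i0) && (i != i1)) l i (J i).
    rewrite (eq_bigl (fun c : 'I_r.+1 => (c != i0) && (c != i1))) => [|c]; last by rewrite andbC.
    exact: eq_bigr.
  rewrite Q (eq_bigr (fun c : 'I_r.+1 => l c (J c)) Pi) Sopp /lam /del /jj Ea Ea1 eqxx (negbTE ne) /nu_hat.
  ring.
move=> h; rewrite abszM S1 mul1n in h; apply: h => c k.
by rewrite hf vcolE.
Qed.

Lemma D1_pe r (n : nat -> nat) (l d : nat -> nat -> int) t : t <> EE ->
  forall (i1 : 'I_r.+1) (J : 'I_r.+1 -> nat),
  (forall i, i != i1 -> (1 <= J i <= n i)%N) ->
  (gcdl (Mset r n l d t) %| `|(\prod_(i < r.+1 | i != i1) l i (J i))%R|)%N.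
Proof.
move=> ht i1 J hJ.
have [cu [s [hs hu]]] := pos_u r n l d t ht.
have [f hf] : exists f : 'I_r.+1 -> 'I_(ncols r n l d t), forall c, c != i1 ->
    nth (fun _ => 0) (cols r n l d t) (f c) = vcol r l d c (J c).
  apply: (@fin_choice 'I_r.+1 'I_(ncols r n l d t) (fun c fc => c != i1 -> nth (fun _ => 0) (cols r n l d t) fc = vcol r l d c (J c))) => c.
  case: (boolP (c == i1)) => h; first by exists cu.
  have [fc e] := @pos_v r n l d t c (J c) (ltn_ord c) (hJ c h).
  by exists fc.
pose lam c := if c == i1 then 0 else l c (J c).
pose del c := if c == i1 then s else d c (J c).
have := @GMdiv r n l d t (fun c => if c == i1 then cu else f c) (fun c => c) lam del.
have -> : Fexpr r (fun c => c) lam del = s * (\prod_(i < r.+1 | i != i1) l i (J i)) * Sc r (fun c => c) i1.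
  rewrite /Fexpr (bigD1 i1) //= [X in _ + X]big1 ?addr0; last first.
    move=> p hp; rewrite (bigD1 i1) 1?eq_sym //= /lam eqxx mul0r mulr0.
    by rewrite mul0r.
  rewrite /del eqxx; congr (_ * _ * _); apply: eq_bigr => c /negbTE h.
  by rewrite /lam h.
rewrite abszM (abs_Sc_id r i1) muln1 abszM.
have -> : `|s|%N = 1%N by case: hs => ->.
rewrite mul1n; apply => c k.
case: (boolP (c == i1)) => h.
  by rewrite hu /lam /del h mul0r add0r.
by rewrite hf // vcolE /lam /del (negbTE h).
Qed.

Lemma Jset_valid r n (i1 : 'I_r.+1) J : J \in Jset r n i1 ->
  forall i, i != i1 -> (1 <= J i <= n i)%N.
Proof.
rewrite /Jset mem_filter => /andP [/forallP h _] i hi.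
by have := h i; rewrite (negbTE hi).
Qed.

Lemma D1 r n l d t : (forall i, (i <= r)%N -> (1 <= n i)%N) ->
  (gcdl (Mset r n l d t) %| gcdl (Mprime r n l d t))%N.
Proof.
move=> hn; apply: dvd_gcdl => x.
case: t => /=.
- rewrite inE => /orP [/eqP ->|]; first exact: D1_mu.
  case/flatten_mapP => p; rewrite mem_filter => /andP [hp _] /mapP [J hJ ->].
  apply: D1_nu => // i hi; exact: (Jset_valid _ _ _ _ hJ).
- case/flatten_mapP => i1 _ /mapP [J hJ ->].
  by apply: D1_pe => // i hi; exact: (Jset_valid _ _ _ _ hJ).
- case/flatten_mapP => i1 _ /mapP [J hJ ->].
  by apply: D1_pe => // i hi; exact: (Jset_valid _ _ _ _ hJ).
- case/flatten_mapP => i1 _ /mapP [J hJ ->].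
  by apply: D1_pe => // i hi; exact: (Jset_valid _ _ _ _ hJ).
Qed.

Lemma perm_extend r (a : 'I_r.+1 -> 'I_r.+1) (q : 'I_r.+1) :
  (forall c1 c2, c1 != q -> c2 != q -> a c1 = a c2 -> c1 = c2) ->
  exists s : {perm 'I_r.+1}, forall c, c != q -> s c = a c.
Proof.
move=> inj.
have [i1 hi1] : exists i1, i1 \notin [set a c | c in [set~ q]].
  have hc : #|[set a c | c in [set~ q]]| = r.
    rewrite card_in_imset ?cardsC1 ?card_ord // => x y.
    by rewrite !inE => hx hy; apply: inj.
  have : (0 < #|~: [set a c | c in [set~ q]]|)%N.
    have e := cardsC [set a c | c in [set~ q]]; rewrite hc card_ord in e.
    by have -> : #|~: [set a c | c in [set~ q]]| = 1%N by apply/eqP; rewrite -(eqn_add2l r) e addn1.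
  by case/card_gt0P => x; rewrite inE => hx; exists x.
pose b c := if c == q then i1 else a c.
have injb : injective b.
  move=> x y; rewrite /b.
  case: (boolP (x == q)) => hx; case: (boolP (y == q)) => hy.
  - by rewrite (eqP hx) (eqP hy).
  - move=> e; case/negP: hi1; rewrite e; apply: imset_f; by rewrite !inE.
  - move=> e; case/negP: hi1; rewrite -e; apply: imset_f; by rewrite !inE.
  - exact: inj.
exists (perm injb) => c hc; by rewrite permE /b (negbTE hc).
Qed.

Lemma Fexpr_split r a (lam del : 'I_r.+1 -> int) (q : 'I_r.+1) :
  Fexpr r a lam del = del q * ((\prod_(c < r.+1 | c != q) lam c) * Sc r a q) +
    lam q * \sum_(p < r.+1 | p != q) del p * (\prod_(c < r.+1 | (c != p) && (c != q)) lam c) * Sc r a p.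
Proof.
rewrite /Fexpr (bigD1 q) //= mulrA; congr (_ + _).
rewrite big_distrr /=; apply: eq_bigr => p hp.
rewrite (bigD1 q (P := fun c => c != p)) 1?eq_sym //=.
ring.
Qed.

Lemma prod_perm r (s : {perm 'I_r.+1}) (P : pred 'I_r.+1) (F : 'I_r.+1 -> int) :
  \prod_(c < r.+1 | P c) F c = \prod_(k < r.+1 | P ((s^-1)%g k)) F ((s^-1)%g k).
Proof. exact: (reindex_inj perm_inj). Qed.

Lemma permV_eq r (s : {perm 'I_r.+1}) k q : ((s^-1)%g k == q) = (k == s q).
Proof. by rewrite -(inj_eq (@perm_inj _ s)) permKV. Qed.

Lemma other_ord r (i : 'I_r.+1) : (1 <= r)%N -> exists k0 : 'I_r.+1, k0 != i.
Proof.
move=> hr; case: (boolP (i == ord0)) => h.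
  exists ord_max; rewrite (eqP h) -val_eqE /=; by rewrite -lt0n.
by exists ord0; rewrite eq_sym.
Qed.

Lemma A_div r (n : nat -> nat) (l d : nat -> nat -> int) (g : int) :
  (1 <= r)%N ->
  (forall (i0 i1 : 'I_r.+1) (J : 'I_r.+1 -> nat), i0 != i1 ->
     (forall i, i != i1 -> (1 <= J i <= n i)%N) ->
     (g %| nu_hat n l d i0 (J i0) * \prod_(i < r.+1 | (i != i0) && (i != i1)) l i (J i))%Z) ->
  forall (a : 'I_r.+1 -> 'I_r.+1) (j : 'I_r.+1 -> nat) (q : 'I_r.+1),
  (forall c, (1 <= j c <= n (a c))%N) ->
  (g %| nu_hat n l d (a q) (j q) *
     ((\prod_(c < r.+1 | c != q) l (a c) (j c)) * Sc r a q))%Z.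
Proof.
move=> hr Hnu a j q hj.
case: (boolP (Sc r a q == 0)) => [/eqP -> | nz]; first by rewrite !mulr0 dvdz0.
rewrite mulrA; apply: dvdz_mulr.
have [s hs] := perm_extend r a q (Sc_nz_inj _ _ _ nz).
set i := a q; set i1 := s q.
pose J k := j ((s^-1)%g k).
have aJ : forall k, k != i1 -> a ((s^-1)%g k) = k.
  by move=> k hk; rewrite -hs ?permKV // permV_eq.
have hJ : forall k, k != i1 -> (1 <= J k <= n k)%N.
  by move=> k hk; have := hj ((s^-1)%g k); rewrite aJ.
have E : \prod_(c < r.+1 | c != q) l (a c) (j c) = \prod_(k < r.+1 | k != i1) l k (J k).
  rewrite (prod_perm r s); apply: eq_big => k; first by rewrite permV_eq.
  by rewrite permV_eq => hk; rewrite aJ.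
rewrite E.
pose J' k := if k == i then j q else J k.
have hJ' : forall k, k != i -> J' k = J k by move=> k /negbTE h; rewrite /J' h.
have Ji : J' i = j q by rewrite /J' eqxx.
case: (boolP (i1 == i)) => h1.
- have [k0 hk0] := other_ord r i hr.
  rewrite (eqP h1) (bigD1 k0) //= mulrCA; apply: dvdz_mull.
  have hv : forall k, k != k0 -> (1 <= J' k <= n k)%N.
    move=> k hk; case: (boolP (k == i)) => [/eqP ->|hki]; first by rewrite Ji; apply: hj.
    by rewrite hJ' //; apply: hJ; rewrite (eqP h1).
  have ne : i != k0 by rewrite eq_sym.
  have H := Hnu i k0 J' ne hv; rewrite Ji in H.
  have Ep : \prod_(k < r.+1 | (k != i) && (k != k0)) l k (J k) =
            \prod_(k < r.+1 | (k != i) && (k != k0)) l k (J' k).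
    by apply: eq_bigr => k /andP [hk _]; rewrite hJ'.
  by rewrite Ep.
- rewrite (bigD1 i) 1?eq_sym //= mulrCA; apply: dvdz_mull.
  have hv : forall k, k != i1 -> (1 <= J' k <= n k)%N.
    move=> k hk; case: (boolP (k == i)) => [/eqP ->|hki]; first by rewrite Ji; apply: hj.
    by rewrite hJ' //; apply: hJ.
  have ne : i != i1 by rewrite eq_sym.
  have H := Hnu i i1 J' ne hv; rewrite Ji in H.
  rewrite (eq_bigl (fun k => (k != i) && (k != i1))) => [|k]; last by rewrite andbC.
  have Ep : \prod_(k < r.+1 | (k != i) && (k != i1)) l k (J k) =
            \prod_(k < r.+1 | (k != i) && (k != i1)) l k (J' k).
    by apply: eq_bigr => k /andP [hk _]; rewrite hJ'.
  by rewrite Ep.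
Qed.

Lemma B_div r (n : nat -> nat) (l d : nat -> nat -> int) (g : int) :
  (forall (i0 i1 : 'I_r.+1) (J : 'I_r.+1 -> nat), i0 != i1 ->
     (forall i, i != i1 -> (1 <= J i <= n i)%N) ->
     (g %| nu_hat n l d i0 (J i0) * \prod_(i < r.+1 | (i != i0) && (i != i1)) l i (J i))%Z) ->
  forall (a : 'I_r.+1 -> 'I_r.+1) (j : 'I_r.+1 -> nat) (q : 'I_r.+1),
  (forall c, (1 <= j c <= n (a c))%N) ->
  (g %| nu_hat n l d (a q) (j q) *
     \sum_(p < r.+1 | p != q) d (a p) (j p) *
        (\prod_(c < r.+1 | (c != p) && (c != q)) l (a c) (j c)) * Sc r a p)%Z.
Proof.
move=> Hnu a j q hj.
rewrite big_distrr /=; apply: rpred_sum => p hp.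
case: (boolP (Sc r a p == 0)) => [/eqP -> | nz]; first by rewrite !mulr0 dvdz0.
rewrite (_ : forall x y z w : int, x * (y * z * w) = (y * w) * (x * z)); last by move=> *; ring.
apply: dvdz_mull.
have [s hs] := perm_extend r a p (Sc_nz_inj _ _ _ nz).
set i := a q; set i1 := s p.
pose J k := j ((s^-1)%g k).
have aJ : forall k, k != i1 -> a ((s^-1)%g k) = k.
  by move=> k hk; rewrite -hs ?permKV // permV_eq.
have hJ : forall k, k != i1 -> (1 <= J k <= n k)%N.
  by move=> k hk; have := hj ((s^-1)%g k); rewrite aJ.
have si : s q = i by rewrite /i hs // eq_sym.
have ne : i != i1 by rewrite -si (inj_eq perm_inj) eq_sym.
have Ji : J i = j q by rewrite /J -si permK.
have E : \prod_(c < r.+1 | (c != p) && (c != q)) l (a c) (j c) =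
         \prod_(k < r.+1 | (k != i) && (k != i1)) l k (J k).
  rewrite (prod_perm r s); apply: eq_big => k.
    by rewrite !permV_eq -/i1 si andbC.
  by move=> /andP [hk _]; rewrite aJ // -permV_eq.
rewrite E -Ji; exact: Hnu.
Qed.

Lemma Fexpr_ext r a (lam del lam' del' : 'I_r.+1 -> int) :
  (forall c, lam c = lam' c) -> (forall c, del c = del' c) ->
  Fexpr r a lam del = Fexpr r a lam' del'.
Proof.
move=> h1 h2; apply: eq_bigr => p _; rewrite h2; congr (_ * _ * _).
by apply: eq_bigr => c _.
Qed.

Lemma dvdz_coprime (g x y z : int) : coprimez x y ->
  (g %| x * z)%Z -> (g %| y * z)%Z -> (g %| z)%Z.
Proof.
case/coprimezP => [[u v]] /= e h1 h2.
have -> : z = u * (x * z) + v * (y * z).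
  by rewrite !mulrA -mulrDl e mul1r.
by apply: rpredD; apply: dvdz_mull.
Qed.

Lemma sum_mu r (n : nat -> nat) (l d : nat -> nat -> int) (a : 'I_r.+1 -> 'I_r.+1) :
  injective a ->
  \sum_(p < r.+1) d (a p) (n (a p)) * \prod_(c < r.+1 | c != p) l (a c) (n (a c)) =
  mu_hat r n l d.
Proof.
move=> inja; pose s := perm inja.
have sE : forall c, s c = a c by move=> c; rewrite permE.
rewrite /mu_hat [RHS](reindex_inj (@perm_inj _ s)) /=; apply: eq_bigr => p _.
rewrite sE; congr (_ * _).
rewrite (prod_perm r s); apply: eq_big => k.
  by rewrite permV_eq sE.
by move=> _; rewrite -sE permKV.
Qed.

Lemma E2 r (n : nat -> nat) (l d : nat -> nat -> int) (g : int) :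
  (1 <= r)%N ->
  (forall i, (i <= r)%N -> (1 <= n i)%N) ->
  (forall i j, (i <= r)%N -> (1 <= j <= n i)%N -> coprimez (l i j) (d i j)) ->
  (forall (i0 i1 : 'I_r.+1) (J : 'I_r.+1 -> nat), i0 != i1 ->
     (forall i, i != i1 -> (1 <= J i <= n i)%N) ->
     (g %| nu_hat n l d i0 (J i0) * \prod_(i < r.+1 | (i != i0) && (i != i1)) l i (J i))%Z) ->
  (g %| mu_hat r n l d)%Z ->
  forall (a : 'I_r.+1 -> 'I_r.+1) (j : 'I_r.+1 -> nat),
  (forall c, (1 <= j c <= n (a c))%N) ->
  (g %| Fexpr r a (fun c => l (a c) (j c)) (fun c => d (a c) (j c)))%Z.
Proof.
move=> hr hn hcop Hnu Hmu a.
suff H : forall m j, (forall c, (1 <= j c <= n (a c))%N) ->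
    (forall c : 'I_r.+1, (m <= c)%N -> j c = n (a c)) ->
    (g %| Fexpr r a (fun c => l (a c) (j c)) (fun c => d (a c) (j c)))%Z.
  by move=> j hj; apply: (H r.+1) => // c; rewrite leqNgt ltn_ord.
have hna : forall c, (1 <= n (a c) <= n (a c))%N.
  by move=> c; rewrite leqnn hn // -ltnS.
elim=> [|m IH] j hj hm.
  rewrite (@Fexpr_ext r a _ _ (fun c => l (a c) (n (a c))) (fun c => d (a c) (n (a c)))); 
    try by move=> c; rewrite hm.
  case: (boolP (injectiveb a)) => [/injectiveP inja | /injectivePn [c1 [c2 ne e]]].
    by rewrite Fexpr_perm // (sum_mu r n l d a inja); apply: dvdz_mull.
  by rewrite -det_GM (GM_eqcol _ _ _ _ _ _ ne e) ?e // dvdz0.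
case: (ltnP m r.+1) => hm'; last first.
  apply: IH => // c hc; move: (leq_trans hm' hc); by rewrite leqNgt ltn_ord.
pose q := Ordinal hm'.
pose j' c := if c == q then n (a q) else j c.
have hj' : forall c, (1 <= j' c <= n (a c))%N.
  by move=> c; rewrite /j'; case: eqP => [->|_]; [apply: hna | apply: hj].
have Hj' : (g %| Fexpr r a (fun c => l (a c) (j' c)) (fun c => d (a c) (j' c)))%Z.
  apply: IH => // c hc; rewrite /j'; case: (boolP (c == q)) => [/eqP ->//|hcq].
  apply: hm; rewrite ltn_neqAle hc andbT; apply: contraNneq hcq => e.
  by apply/eqP/val_inj; rewrite /= e.
move: Hj'; set F' := Fexpr _ _ _ _ => Hj'.
set F := Fexpr _ _ _ _.
set A := (\prod_(c < r.+1 | c != q) l (a c) (j c)) * Sc r a q.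
set B := \sum_(p < r.+1 | p != q) d (a p) (j p) *
        (\prod_(c < r.+1 | (c != p) && (c != q)) l (a c) (j c)) * Sc r a p.
have EF : F = d (a q) (j q) * A + l (a q) (j q) * B by rewrite /F (Fexpr_split _ _ _ _ q).
have EF' : F' = d (a q) (n (a q)) * A + l (a q) (n (a q)) * B.
  rewrite /F' (Fexpr_split _ _ _ _ q) /j' eqxx; congr (_ * (_ * _) + _ * _).
    by apply: eq_bigr => c /negbTE ->.
  apply: eq_bigr => p /negbTE hp; rewrite hp; congr (_ * _ * _).
  by apply: eq_bigr => c /andP [_ /negbTE ->].
have hA := A_div _ _ _ _ _ hr Hnu a j q hj.
have hB := B_div _ _ _ _ _ Hnu a j q hj.
rewrite -/A in hA; rewrite -/B in hB.
apply: (@dvdz_coprime _ (l (a q) (n (a q))) (d (a q) (n (a q)))).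
- by apply: hcop; [rewrite -ltnS | apply: hna].
- have -> : l (a q) (n (a q)) * F = l (a q) (j q) * F' - nu_hat n l d (a q) (j q) * A.
    by rewrite EF EF' /nu_hat; ring.
  by apply: rpredB => //; apply: dvdz_mull.
- have -> : d (a q) (n (a q)) * F = d (a q) (j q) * F' + nu_hat n l d (a q) (j q) * B.
    by rewrite EF EF' /nu_hat; ring.
  by apply: rpredD => //; apply: dvdz_mull.
Qed.

Lemma N2 r (n : nat -> nat) (l d : nat -> nat -> int) (g : int) :
  (forall (i1 : 'I_r.+1) (J : 'I_r.+1 -> nat),
     (forall i, i != i1 -> (1 <= J i <= n i)%N) ->
     (g %| \prod_(i < r.+1 | i != i1) l i (J i))%Z) ->
  forall (a : 'I_r.+1 -> 'I_r.+1) (lam del : 'I_r.+1 -> int) (j : 'I_r.+1 -> nat),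
  (forall c, lam c = 0 \/ (lam c = l (a c) (j c) /\ (1 <= j c <= n (a c))%N)) ->
  (g %| Fexpr r a lam del)%Z.
Proof.
move=> Hpe a lam del j hc.
apply: rpred_sum => p _.
case: (boolP (Sc r a p == 0)) => [/eqP -> | nz]; first by rewrite !mulr0 dvdz0.
apply: dvdz_mulr; apply: dvdz_mull.
case: (boolP [exists c, (c != p) && (lam c == 0)]).
  case/existsP => c /andP [hcp /eqP h0].
  by rewrite (bigD1 c) //= h0 mul0r dvdz0.
rewrite negb_exists => /forallP hall.
have hv : forall c, c != p -> lam c = l (a c) (j c) /\ (1 <= j c <= n (a c))%N.
  move=> c hcp; case: (hc c) => // h0.
  by have := hall c; rewrite hcp h0 eqxx.
have [s hs] := perm_extend r a p (Sc_nz_inj _ _ _ nz).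
set i1 := s p.
pose J k := j ((s^-1)%g k).
have aJ : forall k, k != i1 -> a ((s^-1)%g k) = k.
  by move=> k hk; rewrite -hs ?permKV // permV_eq.
have hJ : forall k, k != i1 -> (1 <= J k <= n k)%N.
  move=> k hk; have hk' : (s^-1)%g k != p by rewrite permV_eq.
  have [_] := hv _ hk'; by rewrite aJ.
have -> : \prod_(c < r.+1 | c != p) lam c = \prod_(k < r.+1 | k != i1) l k (J k).
  rewrite (prod_perm r s); apply: eq_big => k; first by rewrite permV_eq.
  move=> hk; have [-> _] := hv _ hk; rewrite aJ //; by rewrite -permV_eq.
exact: Hpe.
Qed.

Lemma mkJ r (n : nat -> nat) (i1 : 'I_r.+1) (J : 'I_r.+1 -> nat) :
  (forall i, i != i1 -> (1 <= J i <= n i)%N) ->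
  exists J' : {ffun 'I_r.+1 -> 'I_(nmax r n).+1},
    J' \in Jset r n i1 /\ forall i, i != i1 -> (J' i : nat) = J i.
Proof.
move=> hJ.
have hb : forall i, i != i1 -> (J i < (nmax r n).+1)%N.
  move=> i hi; rewrite ltnS; apply: (@leq_trans (n i)); first by case/andP: (hJ i hi).
  rewrite /nmax; exact: (@leq_bigmax _ (fun i : 'I_r.+1 => n i) i).
exists [ffun i => if i == i1 then ord0 else inord (J i)]; split.
  rewrite /Jset mem_filter mem_enum andbT; apply/forallP => i; rewrite ffunE.
  case: (boolP (i == i1)) => // hi.
  by rewrite inordK ?hb // hJ.
by move=> i hi; rewrite ffunE (negbTE hi) inordK // hb.
Qed.

Lemma dvdz_gcdl s (x : int) : `|x|%N \in s -> ((gcdl s)%:Z %| x)%Z.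
Proof. by move=> h; rewrite dvdzE /=; apply: gcdl_dvd. Qed.

Lemma M_nu r (n : nat -> nat) (l d : nat -> nat -> int) (i0 i1 : 'I_r.+1) (J : 'I_r.+1 -> nat) :
  i0 != i1 -> (forall i, i != i1 -> (1 <= J i <= n i)%N) ->
  ((gcdl (Mprime r n l d EE))%:Z %| nu_hat n l d i0 (J i0) *
      \prod_(i < r.+1 | (i != i0) && (i != i1)) l i (J i))%Z.
Proof.
move=> ne hJ; have [J' [hJ' eJ]] := mkJ r n i1 J hJ.
apply: dvdz_gcdl; rewrite /Mprime inE; apply/orP; right.
apply/flatten_mapP; exists (i0, i1).
  rewrite mem_filter /= ne /=; apply/flatten_mapP; exists i0; rewrite ?mem_enum //.
  by apply: map_f; rewrite mem_enum.
apply/mapP; exists J' => //=.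
rewrite eJ //; congr (absz (_ * _)); apply: eq_bigr => i /andP [_ hi].
by rewrite eJ.
Qed.

Lemma M_pe r (n : nat -> nat) (l d : nat -> nat -> int) t (i1 : 'I_r.+1) (J : 'I_r.+1 -> nat) :
  t <> EE -> (forall i, i != i1 -> (1 <= J i <= n i)%N) ->
  ((gcdl (Mprime r n l d t))%:Z %| \prod_(i < r.+1 | i != i1) l i (J i))%Z.
Proof.
move=> ht hJ; have [J' [hJ' eJ]] := mkJ r n i1 J hJ.
apply: dvdz_gcdl.
have -> : `|(\prod_(i < r.+1 | i != i1) l i (J i))%R|%N = `|(\prod_(i < r.+1 | i != i1) l i (J' i))%R|%N.
  by congr (`|_|%N); apply: eq_bigr => i hi; rewrite eJ.
have H : `|(\prod_(i < r.+1 | i != i1) l i (J' i))%R|%N \in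
    flatten [seq [seq `|(\prod_(i < r.+1 | i != i2) l i (J0 i))%R|%N | J0 : {ffun 'I_r.+1 -> 'I_(nmax r n).+1} <- Jset r n i2]
            | i2 <- enum 'I_r.+1].
  apply/flatten_mapP; exists i1; first by rewrite mem_enum.
  by apply: (map_f (fun J0 : {ffun 'I_r.+1 -> 'I_(nmax r n).+1} => `|(\prod_(i < r.+1 | i != i1) l i (J0 i))%R|%N)).
by case: t ht H.
Qed.

Lemma M_mu r (n : nat -> nat) (l d : nat -> nat -> int) :
  ((gcdl (Mprime r n l d EE))%:Z %| mu_hat r n l d)%Z.
Proof. by apply: dvdz_gcdl; rewrite /Mprime inE eqxx. Qed.

Lemma D2core r (n : nat -> nat) (l d : nat -> nat -> int) t :
  (1 <= r)%N ->
  (forall i, (i <= r)%N -> (1 <= n i)%N) ->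
  (forall i j, (i <= r)%N -> (1 <= j <= n i)%N -> coprimez (l i j) (d i j)) ->
  forall (a : 'I_r.+1 -> 'I_r.+1) (lam del : 'I_r.+1 -> int) (j : 'I_r.+1 -> nat),
  (forall c, (lam c = l (a c) (j c) /\ del c = d (a c) (j c) /\ (1 <= j c <= n (a c))%N) \/
             (t <> EE /\ lam c = 0)) ->
  ((gcdl (Mprime r n l d t))%:Z %| Fexpr r a lam del)%Z.
Proof.
move=> hr hn hcop a lam del j hX.
case: t hX => hX.
- rewrite (@Fexpr_ext r a lam del (fun c => l (a c) (j c)) (fun c => d (a c) (j c))); first last.
  + by move=> c; case: (hX c) => [[_ [-> _]] | [] //].
  + by move=> c; case: (hX c) => [[-> _] | [] //].
  apply: (@E2 r n l d _ hr hn hcop) => //.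
  + by move=> i0 i1 J; apply: M_nu.
  + exact: M_mu.
  + by move=> c; case: (hX c) => [[_ [_ h]] | [] //].
- apply: (@N2 r n l d _ _ a lam del j).
    by move=> i1 J; apply: M_pe.
  by move=> c; case: (hX c) => [[h1 [_ h2]] | [_ h]]; [right | left].
- apply: (@N2 r n l d _ _ a lam del j).
    by move=> i1 J; apply: M_pe.
  by move=> c; case: (hX c) => [[h1 [_ h2]] | [_ h]]; [right | left].
- apply: (@N2 r n l d _ _ a lam del j).
    by move=> i1 J; apply: M_pe.
  by move=> c; case: (hX c) => [[h1 [_ h2]] | [_ h]]; [right | left].
Qed.

Lemma D2 r n l d t :
  (1 <= r)%N ->
  (forall i, (i <= r)%N -> (1 <= n i)%N) ->
  (forall i j, (i <= r)%N -> (1 <= j <= n i)%N -> coprimez (l i j) (d i j)) ->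
  (gcdl (Mprime r n l d t) %| gcdl (Mset r n l d t))%N.
Proof.
move=> hr hn hcop; apply: dvd_gcdl => x /mapP [F _ ->].
suff : ((gcdl (Mprime r n l d t) : int) %| \det (colsub (fun i => F i) (Pmat r n l d t)))%Z by rewrite dvdzE.
pose U := ('I_r.+1 * nat * int * int)%type.
pose Pc (c : 'I_r.+1) (x : U) :=
  (forall k, nth (fun _ => 0) (cols r n l d t) (F c) k = x.1.2 * ecoord r x.1.1.1 k + ucol r k * x.2) /\
  ((x.1.2 = l x.1.1.1 x.1.1.2 /\ x.2 = d x.1.1.1 x.1.1.2 /\ (1 <= x.1.1.2 <= n x.1.1.1)%N) \/
   (t <> EE /\ x.1.2 = 0)).
have [X hX] : exists X : 'I_r.+1 -> U, forall c, Pc c (X c).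
  apply: (@fin_choice 'I_r.+1 U Pc) => c.
  case: (cols_class r n l d t (F c)) => [[i [j [hi [hj e]]]] | [ht [s [_ hs]]]].
    exists (Ordinal (hi : (i < r.+1)%N), j, l i j, d i j); split.
      by move=> k; rewrite e vcolE.
    by left.
  exists (ord0, 0%N, 0, s); split; last by right.
  by move=> k; rewrite hs mul0r add0r.
rewrite (@colsub_GM r n l d t (fun i => F i) (fun c => (X c).1.1.1) (fun c => (X c).1.2) (fun c => (X c).2)); last first.
  by move=> c k; case: (hX c) => h _; rewrite h.
rewrite det_GM; apply: (@D2core r n l d t hr hn hcop _ _ _ (fun c => (X c).1.1.2)) => c.
by case: (hX c).
Qed.

Theorem proposition4p11 (r : nat) (n : nat -> nat) (l d : nat -> nat -> int)
  (t : ptype)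
  (hr : (1 <= r)%N)
  (hn : forall i, (i <= r)%N -> (1 <= n i)%N)
  (hl : forall i j, (i <= r)%N -> (1 <= j <= n i)%N -> 1 <= l i j)
  (hcop : forall i j, (i <= r)%N -> (1 <= j <= n i)%N -> coprimez (l i j) (d i j))
  (hslope : forall i j, (i <= r)%N -> (1 <= j)%N -> (j < n i)%N ->
     (d i j.+1)%:~R / (l i j.+1)%:~R < (d i j)%:~R / (l i j)%:~R :> rat)
  (hdef : is_defining r n l d t) :
  gcdl (Mset r n l d t) = gcdl (Mprime r n l d t).
Proof.
by apply/eqP; rewrite eqn_dvd (D1 r n l d t hn) (D2 r n l d t hr hn hcop).
Qed.
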